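(* There are no semi-equivelar maps of types $(3^4,4^2)$ or $(3,4^4)$ on the closed surface of Euler characteristic $-1$. *)

(* Defs.v *)
From HB Require Import structures.
From mathcomp Require Import all_boot all_order all_algebra.
Set Implicit Arguments. Unset Strict Implicit. Unset Printing Implicit Defensive.

(* A map with vertex set 'I_n is given by its list of faces; each face is
   a cyclic sequence of vertices (its boundary cycle). *)
Section Maps.
Variable n : nat.
Implicit Types (f : seq 'I_n) (F : seq (seq 'I_n)) (u v w : 'I_n).

Definition face_edge f u v : bool :=
  ((u, v) \in zip f (rot 1 f)) || ((v, u) \in zip f (rot 1 f)).

Definition face_of F (i : nat) : seq 'I_n := nth [::] F i.

Definition map_edge F u v : bool := has (fun f => face_edge f u v) F.

Definition edge_set F : {set 'I_n * 'I_n} :=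
  [set p : 'I_n * 'I_n | (p.1 < p.2)%N && map_edge F p.1 p.2].

Definition euler_char F : int :=
  (n%:Z - (#|edge_set F|)%:Z + (size F)%:Z)%R.

Definition face_cycle_at F v (s : seq nat) : Prop :=
  [/\ uniq s, (3 <= size s)%N,
      (forall i, i \in s <-> (i < size F)%N /\ v \in face_of F i) &
      (forall k, (k < size s)%N ->
         exists w, face_edge (face_of F (nth 0 s k)) v w &&
                   face_edge (face_of F (nth 0 s (k.+1 %% size s))) v w)].

(* polyhedral map on a closed surface (combinatorial description):
   faces are polygons (cycles of >= 3 distinct vertices), two distinct faces
   meet in the empty set, a vertex or an edge, each edge lies in exactly two
   faces, and the faces around each vertex form a single cycle. *)
Definition polyhedral_map F : Prop :=
  [/\ (forall i, (i < size F)%N -> uniq (face_of F i) /\ (3 <= size (face_of F i))%N),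
      (forall i j, (i < j < size F)%N ->
         let c := [seq x <- face_of F i | x \in face_of F j] in
         (size c <= 1)%N \/
         (exists x y, c = [:: x; y] /\ face_edge (face_of F i) x y
                                     /\ face_edge (face_of F j) x y)),
      (forall u v, map_edge F u v -> count (fun f => face_edge f u v) F = 2) &
      (forall v, exists s, face_cycle_at F v s)].

Definition map_connected F : Prop :=
  forall u v, connect (fun x y => map_edge F x y) u v.

Definition has_vertex_type F v (t : seq nat) : Prop :=
  exists s, face_cycle_at F v s /\
    exists r, [seq size (face_of F i) | i <- s] = rot r t \/
              [seq size (face_of F i) | i <- s] = rot r (rev t).

Definition semi_equivelar F (t : seq nat) : Prop :=
  forall v, has_vertex_type F v t.
End Maps.

(* Main.v *)
Require Import Defs.
From HB Require Import structures.
From mathcomp Require Import all_boot all_order all_algebra.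
From mathcomp Require Import zify.
Set Implicit Arguments. Unset Strict Implicit. Unset Printing Implicit Defensive.

Lemma sumb_count (T : Type) (s : seq T) (P b : pred T) :
  \sum_(i <- s | P i) (b i : nat) = count (fun i => P i && b i) s.
Proof.
elim: s => [|x s IH]; first by rewrite big_nil.
by rewrite big_cons /= IH; case: (P x); case: (b x).
Qed.

Lemma count_sum (T : Type) (s : seq T) (b : pred T) :
  count b s = \sum_(i <- s) (b i : nat).
Proof. by rewrite sumb_count. Qed.

Lemma sumb_card (T : finType) (P : pred T) : \sum_(v : T) (P v : nat) = #|P|.
Proof.
rewrite -sum1_card [RHS]big_mkcond; apply: eq_bigr => v _.
by rewrite /in_mem /=; case: (P v).
Qed.

Lemma nth_rot1 (T : Type) (x0 : T) (s : seq T) j :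
  j < size s -> nth x0 (rot 1 s) j = nth x0 s (j.+1 %% size s).
Proof.
case: s => [//|x s] /= hj; rewrite rot1_cons nth_rcons.
case: ltnP => h.
  by rewrite modn_small.
have -> : j = size s by lia.
by rewrite eqxx modnn.
Qed.

Lemma succ_mod j K : j < K -> (j.+1 %% K = if j.+1 < K then j.+1 else 0).
Proof. move=> h; case: ltnP => h2; first by rewrite modn_small.
have -> : j.+1 = K by lia. by rewrite modnn. Qed.

Lemma succ_mod_neq j K : 2 < K -> j < K -> j != j.+1 %% K.
Proof. move=> h1 h2. rewrite succ_mod //; case: ifP; lia. Qed.

Lemma succ_mod_swap j1 j2 K : 2 < K -> j1 < K -> j2 < K ->
  j1 = j2.+1 %% K -> j1.+1 %% K = j2 -> False.
Proof. move=> h1 h2 h3. rewrite !succ_mod //; do 2 case: ifP; lia. Qed.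

Lemma face_edgeC n (f : seq 'I_n) u v : face_edge f u v = face_edge f v u.
Proof. by rewrite /face_edge orbC. Qed.

Lemma face_edges_card n (f : seq 'I_n) : uniq f -> 3 <= size f ->
  size f <= #|[set p : 'I_n * 'I_n | (p.1 < p.2)%N && face_edge f p.1 p.2]|.
Proof.
case: f => [//|x0 s] uf hs.
set f := x0 :: s in uf hs *.
set k := size f.
have kk : 2 < k by [].
pose a (j : nat) := nth x0 f j.
pose b (j : nat) := nth x0 f (j.+1 %% k).
pose g (j : 'I_k) : 'I_n * 'I_n :=
  if (a j < b j)%N then (a j, b j) else (b j, a j).
have ltb : forall j, (j.+1 %% k < k)%N by move=> j; rewrite ltn_mod.
have ab_neq : forall j : 'I_k, a j != b j.
  move=> j; have hj := ltn_ord j; rewrite /a /b nth_uniq //.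
  exact: succ_mod_neq.
have ginj : injective g.
  move=> j1 j2; rewrite /g.
  have h1 := ab_neq j1; have h2 := ab_neq j2.
  have e : forall i1 i2, i1 < k -> i2 < k -> nth x0 f i1 = nth x0 f i2 -> i1 = i2.
    by move=> i1 i2 l1 l2 /eqP; rewrite nth_uniq // => /eqP.
  have hj1 := ltn_ord j1; have hj2 := ltn_ord j2.
  case: ltnP => c1; case: ltnP => c2 [ea eb]; apply: val_inj => /=.
  - exact: e (val j1) (val j2) hj1 hj2 ea.
  - have := e _ _ hj1 (ltb j2) ea.
    have := e _ _ (ltb j1) hj2 eb. move=> h h'; exfalso; first [exact: succ_mod_swap kk hj1 hj2 h h' | exact: succ_mod_swap kk hj1 hj2 h' h | exact: succ_mod_swap kk hj2 hj1 (esym h) (esym h') | exact: succ_mod_swap kk hj2 hj1 (esym h') (esym h)].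
  - have := e _ _ (ltb j1) hj2 ea.
    have := e _ _ hj1 (ltb j2) eb. move=> h h'; exfalso; first [exact: succ_mod_swap kk hj1 hj2 h h' | exact: succ_mod_swap kk hj1 hj2 h' h | exact: succ_mod_swap kk hj2 hj1 (esym h) (esym h') | exact: succ_mod_swap kk hj2 hj1 (esym h') (esym h)].
  - exact: e (val j1) (val j2) hj1 hj2 eb.
rewrite -{1}(card_ord k) -cardsT -(card_imset _ ginj).
apply: subset_leq_card; apply/subsetP => p /imsetP [j _ ->]; rewrite inE.
have fe : face_edge f (a j) (b j).
  rewrite /face_edge; apply/orP; left.
  have -> : (a j, b j) = nth (x0, x0) (zip f (rot 1 f)) j.
    by rewrite nth_zip ?size_rot // nth_rot1.
  by apply: mem_nth; rewrite size_zip size_rot minnn.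
have := ab_neq j; rewrite /g; case: (ltnP (a j) (b j)) => c /= hne.
  by rewrite c fe.
rewrite face_edgeC fe andbT ltn_neqAle c andbT.
by apply: contra hne => /eqP h; apply/eqP/val_inj.
Qed.

Lemma pairs_bound n :
  2 * #|[set p : 'I_n * 'I_n | (p.1 < p.2)%N]| + n <= n * n.
Proof.
set A := [set p : 'I_n * 'I_n | (p.1 < p.2)%N].
have eA : #|A| = \sum_(p : 'I_n * 'I_n) ((p.1 < p.2)%N : nat).
  by rewrite (sumb_card (fun p : 'I_n * 'I_n => (p.1 < p.2)%N)); apply: eq_card => p; rewrite inE.
have eB : #|A| = \sum_(p : 'I_n * 'I_n) ((p.2 < p.1)%N : nat).
  rewrite eA (reindex_inj (h := fun p : 'I_n * 'I_n => (p.2, p.1))) //.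
  by case=> a b [c d] /= [-> ->].
have eD : n <= \sum_(p : 'I_n * 'I_n) ((p.1 == p.2) : nat).
  rewrite (sumb_card (fun p : 'I_n * 'I_n => p.1 == p.2)).
  have inj : injective (fun x : 'I_n => (x, x)) by move=> x y [].
  rewrite -{1}(card_ord n) -cardsT -(card_imset _ inj).
  by apply: subset_leq_card; apply/subsetP => p /imsetP [x _ ->]; rewrite unfold_in /=.
have eT : \sum_(p : 'I_n * 'I_n) (((p.1 < p.2)%N : nat) + ((p.2 < p.1)%N : nat)
            + ((p.1 == p.2) : nat)) = n * n.
  rewrite (eq_bigr (fun _ => 1)); last first.
    by move=> [a b] _ /=; rewrite -(inj_eq val_inj) /=; case: ltngtP.
  by rewrite sum1_card card_prod card_ord.
rewrite !big_split /= -eA -eB in eT.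
by rewrite -eT mul2n -addnn leq_add2l.
Qed.

Lemma vert_count n (F : seq (seq 'I_n)) t (v : 'I_n) k :
  semi_equivelar F t ->
  count (fun i => (size (face_of F i) == k) && (v \in face_of F i))
        (iota 0 (size F)) = count_mem k t.
Proof.
move=> H; have [s [[us _ mem _] [r hr]]] := H v.
have pe : perm_eq s [seq i <- iota 0 (size F) | v \in face_of F i].
  apply: uniq_perm => //; first by rewrite filter_uniq // iota_uniq.
  move=> i; rewrite mem_filter mem_iota add0n /=.
  apply/idP/idP; first by move/mem => [-> ->].
  by move=> /andP [h1 h2]; apply/mem.
rewrite -count_filter -(permP pe).
have -> : count (fun i => size (face_of F i) == k) s =
          count (pred1 k) [seq size (face_of F i) | i <- s].
  by rewrite count_map.
case: hr => ->.
  by apply/permP; rewrite perm_rot.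
by apply/permP; rewrite perm_rot perm_rev.
Qed.

Lemma size_in_t n (F : seq (seq 'I_n)) t i :
  polyhedral_map F -> semi_equivelar F t -> i < size F ->
  size (face_of F i) \in t.
Proof.
case=> Hf _ _ _ H hi.
have [_] := Hf i hi.
case e : (face_of F i) => [//|v rest] _.
have [s [[us _ mem _] [r hr]]] := H v.
have iin : i \in s by apply/mem; rewrite e inE eqxx.
have : size (face_of F i) \in [seq size (face_of F i) | i <- s] by apply: map_f.
rewrite e; case: hr => ->; by rewrite mem_rot ?mem_rev.
Qed.

Lemma double_count n (F : seq (seq 'I_n)) k :
  polyhedral_map F ->
  \sum_(v : 'I_n) count (fun i => (size (face_of F i) == k) && (v \in face_of F i))
        (iota 0 (size F)) = k * count (fun i => size (face_of F i) == k) (iota 0 (size F)).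
Proof.
case=> Hf _ _ _.
under eq_bigr do rewrite -sumb_count.
rewrite exchange_big /= big_seq_cond (eq_bigr (fun _ => k)); last first.
  move=> i; rewrite mem_iota add0n /= => /andP [hi hk].
  have [u _] := Hf i hi.
  rewrite (sumb_card (fun v => v \in face_of F i)).
  by rewrite (card_uniqP u); apply/eqP.
by rewrite -big_seq_cond big_const_seq iter_addn_0 mulnC.
Qed.

Lemma edges_lb n (F : seq (seq 'I_n)) :
  polyhedral_map F ->
  \sum_(i <- iota 0 (size F)) size (face_of F i) <= 2 * #|edge_set F|.
Proof.
case=> Hf _ H2 _.
have E2 : 2 * #|edge_set F| =
   \sum_(p in edge_set F) count (fun f => face_edge f p.1 p.2) F.
  rewrite (eq_bigr (fun _ => 2)); first by rewrite sum_nat_const mulnC.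
  by move=> p; rewrite inE => /andP [_ h]; apply: H2.
rewrite E2.
rewrite (eq_bigr (fun p => \sum_(f <- F) (face_edge f p.1 p.2 : nat))); last by move=> p _; rewrite count_sum.
rewrite exchange_big /=.
have -> : \sum_(i <- iota 0 (size F)) size (face_of F i) = \sum_(f <- F) size f.
  by rewrite -{3}(mkseq_nth [::] F) big_map.
rewrite big_seq [X in _ <= X]big_seq; apply: leq_sum => f fF.
have [u s3] : uniq f /\ 2 < size f.
  have := Hf (index f F); rewrite index_mem fF /face_of nth_index //.
  by move=> h; apply: h.
apply: leq_trans (face_edges_card u s3) _.
have -> : #|[set p : 'I_n * 'I_n | (p.1 < p.2)%N && face_edge f p.1 p.2]| =
    \sum_(p : 'I_n * 'I_n) (((p.1 < p.2)%N && face_edge f p.1 p.2) : nat).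
  by rewrite (sumb_card (fun p : 'I_n * 'I_n => (p.1 < p.2)%N && face_edge f p.1 p.2)); apply: eq_card => p; rewrite inE.
rewrite [X in _ <= X]big_mkcond.
apply: leq_sum => p _; rewrite inE.
case: (p.1 < p.2)%N => //=; case h : (face_edge f p.1 p.2) => //=.
rewrite /map_edge; case: hasP => //; case; by exists f.
Qed.

Lemma pair_inter n (F : seq (seq 'I_n)) i j :
  polyhedral_map F -> i < size F -> j < size F -> i != j ->
  \sum_(v : 'I_n) ((v \in face_of F i) * (v \in face_of F j)) <= 2.
Proof.
case=> _ H1 _ _.
wlog lt : i j / i < j.
  move=> W hi hj ne; case: (ltngtP i j) => h; first exact: W.
    under eq_bigr do rewrite mulnC. by apply: W => //; rewrite eq_sym.
  by move: ne; rewrite h eqxx.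
move=> hi hj _.
have hc : size [seq x <- face_of F i | x \in face_of F j] <= 2.
  have := H1 i j; rewrite lt hj /= => /(_ isT) [h|[x [y [-> _]]]] //.
  exact: leq_trans h _.
apply: leq_trans hc; apply: leq_trans (card_size _).
rewrite (eq_bigr (fun v => ((v \in face_of F i) && (v \in face_of F j)) : nat)); last first.
  by move=> v _; rewrite mulnb.
rewrite (sumb_card (fun v => (v \in face_of F i) && (v \in face_of F j))).
by apply/eq_leq/eq_card => v; rewrite mem_filter andbC.
Qed.

Lemma sq_bound n (F : seq (seq 'I_n)) :
  polyhedral_map F ->
  \sum_(v : 'I_n) (count (fun i => (size (face_of F i) == 4) && (v \in face_of F i))
        (iota 0 (size F)) * count (fun i => (size (face_of F i) == 4) && (v \in face_of F i))
        (iota 0 (size F)))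
  <= count (fun i => size (face_of F i) == 4) (iota 0 (size F)) *
     (2 * count (fun i => size (face_of F i) == 4) (iota 0 (size F)) + 2).
Proof.
move=> PM.
set I := iota 0 (size F).
set f4 := count _ I.
under eq_bigr do rewrite -sumb_count big_distrlr /=.
rewrite exchange_big /=.
under eq_bigr do rewrite exchange_big /=.
rewrite mulnC -iter_addn_0 -big_const_seq.
rewrite big_seq_cond [X in _ <= X]big_seq_cond; apply: leq_sum => i /andP [iI Qi].
apply: (@leq_trans (\sum_(j <- I | size (face_of F j) == 4) (2 + 2 * (j == i)))).
  rewrite big_seq_cond [X in _ <= X]big_seq_cond; apply: leq_sum => j /andP [jI Qj].
  move: iI jI; rewrite !mem_iota !add0n /= => hi hj.
  case: eqP => [->|ne].
    rewrite muln1.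
    rewrite (eq_bigr (fun v => (v \in face_of F i) : nat)); last first.
      by move=> v _; rewrite mulnb andbb.
    rewrite (sumb_card (fun v => v \in face_of F i)).
    by apply: leq_trans (card_size _) _; rewrite (eqP Qi).
  rewrite muln0 addn0; apply: pair_inter => //.
  by apply/eqP => h; apply: ne; rewrite h.
rewrite big_split /= -big_distrr /= big_const_seq iter_addn_0 -/f4 mulnC leq_add2l.
rewrite sumb_count; apply: (@leq_trans (2 * 1)); last done.
rewrite leq_pmul2l //.
apply: leq_trans (_ : count (pred1 i) I <= 1).
  by apply: sub_count => j /andP [_ /eqP ->] /=.
by rewrite count_uniq_mem ?iota_uniq // leq_b1.
Qed.

Lemma stats n (F : seq (seq 'I_n)) t :
  polyhedral_map F -> semi_equivelar F t -> all (fun x => (x == 3) || (x == 4)) t ->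
  [/\ size F = count (fun i => size (face_of F i) == 3) (iota 0 (size F))
               + count (fun i => size (face_of F i) == 4) (iota 0 (size F)),
      n * count_mem 3 t = 3 * count (fun i => size (face_of F i) == 3) (iota 0 (size F)),
      n * count_mem 4 t = 4 * count (fun i => size (face_of F i) == 4) (iota 0 (size F)) &
      3 * count (fun i => size (face_of F i) == 3) (iota 0 (size F))
      + 4 * count (fun i => size (face_of F i) == 4) (iota 0 (size F))
      <= 2 * #|edge_set F| ].
Proof.
move=> PM SE At.
have s34 : forall i, i \in iota 0 (size F) ->
    (size (face_of F i) == 3) || (size (face_of F i) == 4).
  move=> i; rewrite mem_iota add0n /= => hi.
  by have := size_in_t PM SE hi; move/allP: At; apply.
have dc : forall k, n * count_mem k t =
    k * count (fun i => size (face_of F i) == k) (iota 0 (size F)).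
  move=> k; rewrite -(double_count k PM).
  rewrite (eq_bigr (fun _ => count_mem k t)); last by move=> v _; rewrite (vert_count _ _ SE).
  by rewrite sum_nat_const card_ord.
split; [| exact: dc | exact: dc |].
  rewrite -{1}(size_iota 0 (size F)) -(count_predC (fun i => size (face_of F i) == 3)).
  congr (_ + _); apply: eq_in_count => i /s34 /=.
  by case/orP => /eqP ->.
apply: leq_trans _ (edges_lb PM).
rewrite (eq_big_seq (fun i => 3 * (size (face_of F i) == 3) + 4 * (size (face_of F i) == 4))); last first.
  move=> i /s34; case/orP => /eqP ->; done.
by rewrite big_split /= -!big_distrr /= -!count_sum.
Qed.

Theorem mainTheorem11 (n : nat) (F : seq (seq 'I_n)) :
  polyhedral_map F -> map_connected F -> euler_char F = (-1)%R ->
  ~ semi_equivelar F [:: 3; 3; 3; 3; 4; 4] /\ ~ semi_equivelar F [:: 3; 4; 4; 4; 4].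
Proof.
move=> PM _ HE.
have EE : #|edge_set F| = n + size F + 1.
  move: HE; rewrite /euler_char => HE; lia.
have EA : 2 * #|edge_set F| + n <= n * n.
  apply: leq_trans (pairs_bound n); rewrite leq_add2r leq_mul2l /=.
  apply: subset_leq_card; apply/subsetP => p; rewrite !inE => /andP [h _]; exact h.
split => SE.
  have [S d3 d4 El] := stats PM SE isT.
  move: d3 d4 => /= d3 d4.
  nia.
have [S d3 d4 El] := stats PM SE isT.
move: d3 d4 => /= d3 d4.
have sq := sq_bound PM.
rewrite (eq_bigr (fun _ => 16)) in sq; last by move=> v _; rewrite (vert_count _ _ SE).
rewrite sum_nat_const card_ord in sq.
nia.
Qed.
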